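(* Let $P$ be a finite poset and let $x$ be a maximal element or a minimal element of $P$. Then the toggleability statistic $\mathfrak{T}_x$ is $0$-mesic under rowmotion on $\mathcal{IC}(P)$, i.e. its average over every rowmotion orbit is $0$.
   Context: All posets are finite. For a poset $P$, a subset $I\subseteq P$ is interval-closed if for all $x,y\in I$ and $z\in P$ with $x\le z\le y$ we have $z\in I$; $\mathcal{IC}(P)$ is the set of interval-closed subsets of $P$. For $x\in P$ the toggle $t_x:\mathcal{IC}(P)\to\mathcal{IC}(P)$ is defined by $t_x(I)=I\triangle\{x\}$ if $I\triangle\{x\}\in\mathcal{IC}(P)$ and $t_x(I)=I$ otherwise. Rowmotion is $\mathrm{Row}=t_{x_1}\circ t_{x_2}\circ\cdots\circ t_{x_N}:\mathcal{IC}(P)\to\mathcal{IC}(P)$, where $(x_1,\dots,x_N)$ is a linear extension of $P$ (so elements are toggled from the top of the poset down); this does not depend on the choice of linear extension. The toggleability statistic $\mathfrak{T}_x:\mathcal{IC}(P)\to\{-1,0,1\}$ is $\mathfrak{T}_x(I)=1$ if $x\notin I$ and $I\cup\{x\}\in\mathcal{IC}(P)$; $\mathfrak{T}_x(I)=-1$ if $x\in I$ and $I-\{x\}\in\mathcal{IC}(P)$; and $0$ otherwise. A statistic is $c$-mesic under rowmotion if its average over each rowmotion orbit equals $c$. *)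

(* Defs.v *)
From mathcomp Require Import all_boot all_order all_algebra.
Set Implicit Arguments. Unset Strict Implicit. Unset Printing Implicit Defensive.
Import Order.Theory GRing.Theory.

Section IC.
Context {disp : Order.disp_t} {P : finPOrderType disp}.
Local Open Scope order_scope.

Definition interval_closed (I : {set P}) : bool :=
  [forall x, forall y, forall z,
     [&& x \in I, y \in I, x <= z & z <= y] ==> (z \in I)].

Definition symdiff1 (I : {set P}) (x : P) : {set P} :=
  (I :\: [set x]) :|: ([set x] :\: I).

Definition toggle (x : P) (I : {set P}) : {set P} :=
  if interval_closed (symdiff1 I x) then symdiff1 I x else I.

Definition linear_extension (s : seq P) : Prop :=
  [/\ uniq s, (forall x, x \in s) &
      (forall x y, x < y -> (index x s < index y s)%N)].

(* Row = t_{x1} o t_{x2} o ... o t_{xN} for s = [:: x1; ...; xN]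
   (t_{xN} is applied first) *)
Definition rowmotion (s : seq P) (I : {set P}) : {set P} :=
  foldr toggle I s.

Definition toggleability (x : P) (I : {set P}) : int :=
  if (x \notin I) && interval_closed (x |: I) then 1%R
  else if (x \in I) && interval_closed (I :\ x) then (-1)%R
  else 0%R.

Definition maximal (x : P) : bool := [forall y, ~~ (x < y)].
Definition minimal (x : P) : bool := [forall y, ~~ (y < x)].

Definition orbit_average (s : seq P) (f : {set P} -> int) (I : {set P}) : rat :=
  ((\sum_(J <- orbit (rowmotion s) I) f J)%:~R / (size (orbit (rowmotion s) I))%:R)%R.

Definition mesic (s : seq P) (f : {set P} -> int) (c : rat) : Prop :=
  forall I, interval_closed I -> orbit_average s f I = c.
End IC.

(* Main.v *)
Require Import Defs.
From mathcomp Require Import all_boot all_order all_algebra.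
Set Implicit Arguments. Unset Strict Implicit. Unset Printing Implicit Defensive.
Import Order.Theory GRing.Theory.

Section Aux.
Context {disp : Order.disp_t} {P : finPOrderType disp}.
Local Open Scope order_scope.
Implicit Types (I J K : {set P}) (x y z : P).

Lemma ICP I : reflect (forall a b z, a \in I -> b \in I -> a <= z -> z <= b -> z \in I)
  (interval_closed I).
Proof.
apply: (iffP forallP) => [H a b z aI bI az zb|H a].
  by move/forallP: (H a) => /(_ b)/forallP/(_ z); rewrite aI bI az zb; apply.
apply/forallP => b; apply/forallP => z; apply/implyP => /and4P[aI bI az zb].
exact: H aI bI az zb.
Qed.

Lemma symdiff1E I y : symdiff1 I y = if y \in I then I :\ y else y |: I.
Proof.
rewrite /symdiff1; apply/setP => z; case: ifP => yI; rewrite !inE;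
  case: (eqVneq z y) => [->|] //=; rewrite ?yI ?andbF ?orbF //.
Qed.

Lemma toggle_other y I z : z != y -> (z \in toggle y I) = (z \in I).
Proof.
move=> zy; rewrite /toggle; case: ifP => // _; rewrite symdiff1E.
by case: ifP => _; rewrite !inE (negPf zy).
Qed.

Lemma foldr_other s I z : z \notin s -> (z \in foldr toggle I s) = (z \in I).
Proof.
elim: s => //= y s IH; rewrite inE negb_or => /andP[zy zs].
by rewrite toggle_other // IH.
Qed.

Lemma toggle_IC y I : interval_closed I -> interval_closed (toggle y I).
Proof. by rewrite /toggle; case: ifP. Qed.

Lemma foldr_IC s I : interval_closed I -> interval_closed (foldr toggle I s).
Proof. by elim: s => //= y s IH /IH; apply: toggle_IC. Qed.

Lemma symdiff1K I y : symdiff1 (symdiff1 I y) y = I.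
Proof.
rewrite [symdiff1 I y]symdiff1E; case: ifP => yI; rewrite symdiff1E.
  by rewrite !inE eqxx /= setD1K.
by rewrite !inE eqxx /= setU1K // yI.
Qed.

Lemma toggleK y I : interval_closed I -> toggle y (toggle y I) = I.
Proof.
move=> IC; rewrite {2}/toggle; case: ifP => H.
  by rewrite /toggle symdiff1K IC.
by rewrite /toggle H.
Qed.

Lemma rowmotion_inj (s : seq P) : {in [pred I : {set P} | interval_closed I] &, injective (rowmotion s)}.
Proof.
move=> I J; rewrite !inE => IC JC; rewrite /rowmotion.
elim: s => //= y s IH E; apply: IH.
by rewrite -(toggleK y (foldr_IC s IC)) E toggleK // foldr_IC.
Qed.

Lemma IC_del_max I x : maximal x -> interval_closed I -> interval_closed (I :\ x).
Proof.
move=> /forallP mx /ICP IC; apply/ICP => a b z; rewrite !inE.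
move=> /andP[ax aI] /andP[bx bI] az zb; rewrite (IC a b z) // andbT.
apply/eqP => zx; move: zb; rewrite zx le_eqVlt eq_sym (negPf bx) /=.
by rewrite (negPf (mx b)).
Qed.

Lemma IC_del_min I x : minimal x -> interval_closed I -> interval_closed (I :\ x).
Proof.
move=> /forallP mn /ICP IC; apply/ICP => a b z; rewrite !inE.
move=> /andP[ax aI] /andP[bx bI] az zb; rewrite (IC a b z) // andbT.
apply/eqP => zx; move: az; rewrite zx le_eqVlt (negPf ax) /=.
by rewrite (negPf (mn a)).
Qed.

Definition condmax x I := [forall a, forall z, [&& a \in I, a < z & z < x] ==> (z \in I)].
Definition condmin x I := [forall b, forall z, [&& b \in I, x < z & z < b] ==> (z \in I)].

Lemma IC_add_max I x : maximal x -> interval_closed I -> x \notin I ->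
  interval_closed (x |: I) = condmax x I.
Proof.
move=> /forallP mx /ICP IC xI; apply/idP/idP.
  move=> /ICP H; apply/forallP => a; apply/forallP => z; apply/implyP.
  move=> /and3P[aI az zx].
  have := H a x z; rewrite !inE eqxx aI orbT ltW // ltW // => /(_ isT isT isT isT).
  by rewrite lt_eqF.
move=> /forallP C; apply/ICP => a b z; rewrite !inE.
case/orP => [/eqP->|aI].
  by move=> _ xz _; move: xz; rewrite le_eqVlt (negPf (mx z)) orbF => /eqP->; rewrite eqxx.
case/orP => [/eqP->|bI] az zb; last by rewrite (IC a b z) ?orbT.
move: zb; rewrite le_eqVlt => /orP[->//|zx]; apply/orP; right.
move: az; rewrite le_eqVlt => /orP[/eqP<-//|az].
by move/forallP: (C a) => /(_ z); rewrite aI az zx.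
Qed.

Lemma IC_add_min I x : minimal x -> interval_closed I -> x \notin I ->
  interval_closed (x |: I) = condmin x I.
Proof.
move=> /forallP mn /ICP IC xI; apply/idP/idP.
  move=> /ICP H; apply/forallP => b; apply/forallP => z; apply/implyP.
  move=> /and3P[bI xz zb].
  have := H x b z; rewrite !inE eqxx bI orbT ltW // ltW // => /(_ isT isT isT isT).
  by rewrite gt_eqF.
move=> /forallP C; apply/ICP => a b z; rewrite !inE.
case/orP => [/eqP->|aI]; last first.
  case/orP => [/eqP->|bI] az zb; last by rewrite (IC a b z) ?orbT.
  by move: zb; rewrite le_eqVlt (negPf (mn z)) orbF => ->.
case/orP => [/eqP->|bI] xz zb.
  by apply/orP; left; rewrite eq_le zb xz.
move: xz; rewrite le_eqVlt => /orP[/eqP->|xz]; first by rewrite eqxx. apply/orP; right.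
move: zb; rewrite le_eqVlt => /orP[/eqP->//|zb].
by move/forallP: (C b) => /(_ z); rewrite bI xz zb.
Qed.


Lemma split_pos (s1 s2 : seq P) x : linear_extension (s1 ++ x :: s2) ->
  [/\ x \notin s1, x \notin s2, (forall z, z < x -> z \notin s2)
    & (forall z, x < z -> z \notin s1)].
Proof.
case=> U _ H; move: (U); rewrite cat_uniq /= => /and4P[_ hs xs2 _].
move: hs; rewrite negb_or => /andP[xs1 hs].
have ix : index x (s1 ++ x :: s2) = size s1 by rewrite index_cat (negPf xs1) /= eqxx addn0.
split=> // z.
  move=> zx; apply/negP => zs2; have := H _ _ zx; rewrite ix index_cat.
  have zs1 : z \notin s1.
    by apply: contra hs => zs1; apply/hasP; exists z.
  by rewrite (negPf zs1) ltnNge leq_addr.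
move=> xz; apply/negP => zs1; have := H _ _ xz; rewrite ix index_cat zs1.
by rewrite ltnNge ltnW // index_mem.
Qed.

Definition ind (b : bool) : int := if b then 1%R else 0%R.

Lemma max_identity s x I : linear_extension s -> maximal x -> interval_closed I ->
  toggleability x I = (ind (x \in rowmotion s I) - ind (x \in I))%R.
Proof.
move=> Hs mx IC; have [_ sx _] := Hs; case/splitPr: (sx x) => s1 s2 in Hs *; clear sx.
case: (split_pos Hs) => xs1 xs2 lt2 _.
rewrite /rowmotion foldr_cat /= foldr_other //.
set J := foldr toggle I s2.
have JC : interval_closed J by apply: foldr_IC.
have xJ : (x \in J) = (x \in I) by rewrite foldr_other.
rewrite /toggleability /toggle symdiff1E xJ.
case xI: (x \in I) => /=.
  by rewrite (IC_del_max mx JC) (IC_del_max mx IC) !inE eqxx.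
have condE : condmax x J = condmax x I.
  apply: eq_forallb => a; apply: eq_forallb => z.
  case zx: (z < x); rewrite ?andbF //.
  case az: (a < z); rewrite ?andbF //=.
  by rewrite /J !foldr_other // lt2 // (lt_trans az zx).
rewrite (IC_add_max mx JC) ?xJ ?xI // (IC_add_max mx IC) ?xI // condE.
by case: ifP => _; rewrite ?inE ?eqxx ?xJ ?xI.
Qed.

Lemma min_identity s x I : linear_extension s -> minimal x -> interval_closed I ->
  toggleability x (rowmotion s I) = (ind (x \in I) - ind (x \in rowmotion s I))%R.
Proof.
move=> Hs mn IC; have [_ sx _] := Hs; case/splitPr: (sx x) => s1 s2 in Hs *; clear sx.
case: (split_pos Hs) => xs1 xs2 _ gt1.
rewrite /rowmotion foldr_cat /=.
set J := foldr toggle I s2.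
have JC : interval_closed J by apply: foldr_IC.
have xJ : (x \in J) = (x \in I) by rewrite foldr_other.
set K := toggle x J.
have KC : interval_closed K by apply: toggle_IC.
set R := foldr toggle K s1.
have RC : interval_closed R by apply: foldr_IC.
have xR : (x \in R) = (x \in K) by rewrite foldr_other.
have condE : condmin x R = condmin x K.
  apply: eq_forallb => b; apply: eq_forallb => z.
  case xz: (x < z); rewrite ?andbF //=.
  case zb: (z < b); rewrite ?andbF //=.
  by rewrite /R !foldr_other // gt1 // (lt_trans xz zb).
rewrite /toggleability xR.
case xK: (x \in K) => /=.
  rewrite (IC_del_min mn RC).
  suff -> : (x \in I) = false by [].
  move: xK; rewrite /K /toggle symdiff1E xJ.
  case xI: (x \in I); last by [].
  by rewrite (IC_del_min mn JC) !inE eqxx.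
rewrite (IC_add_min mn RC) ?xR ?xK // condE -(IC_add_min mn KC) ?xK //.
move: xK; rewrite /K /toggle symdiff1E xJ.
case xI: (x \in I).
  rewrite (IC_del_min mn JC) setD1K ?xJ // JC => _; by [].
case: ifP => H; first by rewrite !inE eqxx.
by rewrite H.
Qed.

Lemma tele (T : Type) (f : T -> T) (h : T -> int) n (I : T) :
  (\sum_(J <- traject f I n) (h (f J) - h J) = h (iter n f I) - h I)%R.
Proof.
elim: n I => [|n IH] I /=; first by rewrite big_nil subrr.
by rewrite big_cons IH -iterSr addrC addrA subrK.
Qed.
End Aux.

Theorem proposition2p19 (disp : Order.disp_t) (P : finPOrderType disp)
  (s : seq P) (x : P) :
  linear_extension s -> (maximal x || minimal x) ->
  mesic s (toggleability x) 0%R.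
Proof.
move=> Hs Hx I IC; rewrite /orbit_average.
set f := rowmotion s.
have Sin : {homo f : J / J \in [pred J : {set P} | interval_closed J]}.
  by move=> J; rewrite !inE; apply: foldr_IC.
have iterI : iter (order f I) f I = I.
  by apply: (iter_order_in Sin (@rowmotion_inj _ _ s)); rewrite inE.
have orbIC : forall J, J \in orbit f I -> interval_closed J.
  move=> J /trajectP[i _ ->]; elim: i => //= i IH; exact: foldr_IC.
suff -> : (\sum_(J <- orbit f I) toggleability x J = 0)%R by rewrite mul0r.
case/orP: Hx => Hx.
  rewrite (eq_big_seq (fun J => ind (x \in f J) - ind (x \in J))%R).
    by rewrite /orbit tele iterI subrr.
  by move=> J /orbIC JC; apply: max_identity.
have h1 := tele f (toggleability x) (order f I) I.
rewrite iterI subrr sumrB in h1.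
have h2 : (\sum_(J <- orbit f I) toggleability x (f J) = 0)%R.
  rewrite (eq_big_seq (fun J => - (ind (x \in f J) - ind (x \in J)))%R).
    by rewrite sumrN /orbit tele iterI subrr oppr0.
  by move=> J /orbIC JC; rewrite min_identity // opprB.
by move: h1; rewrite /orbit in h2; rewrite h2 sub0r => /eqP; rewrite oppr_eq0 => /eqP.
Qed.
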